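(* Let $q,n$ be positive integers. For every $j\in\{0,1,\dots,q-1\}$, the code $$\mathcal C_q^{(j)}(n;q-1)=\Big\{\mathbf x\in[q]^n:\ \sum_{i=1}^n x_i\equiv j\pmod{q}\Big\}$$ is an optimal $(\cdot,1,\cdot)$-AED code in $[q]^n$ (it is $(\cdot,1,\cdot)$-AED and has maximum cardinality among such codes), and $|\mathcal C_q^{(j)}(n;q-1)|=q^{n-1}$.
   Context: $[q]=\{0,1,\dots,q-1\}$. Channel over $[q]$ with $(\cdot,1,\cdot)$-asymmetric errors (a single asymmetric error of arbitrary magnitude): an input $\mathbf x\in[q]^n$ can produce any output $\mathbf y\in[q]^n$ with $y_i\ge x_i$ for all $i$ and $y_i\ne x_i$ for at most one index $i$. $\mathrm{Out}(\mathbf x)$ denotes the set of all such outputs. A code $\mathcal C\subseteq[q]^n$ is $(\cdot,1,\cdot)$-AED if for all $\mathbf x\in\mathcal C$ and $\mathbf y\in\mathrm{Out}(\mathbf x)$ with $\mathbf y\ne\mathbf x$, we have $\mathbf y\notin\mathcal C$. *)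

(* Defs.v *)
From mathcomp Require Import all_boot.
Set Implicit Arguments. Unset Strict Implicit. Unset Printing Implicit Defensive.

Definition word (q n : nat) := {ffun 'I_n -> 'I_q}.

(* y is an output of x under a single asymmetric error of arbitrary magnitude
   (or no error): y_i >= x_i for all i and y_i <> x_i for at most one i. *)
Definition is_out (q n : nat) (x y : word q n) : bool :=
  [forall i, (x i <= y i)%N] && (#|[set i | x i != y i]| <= 1)%N.

Definition Out (q n : nat) (x : word q n) : {set word q n} :=
  [set y | is_out x y].

Definition is_AED (q n : nat) (C : {set word q n}) : Prop :=
  forall x y : word q n, x \in C -> y \in Out x -> y != x -> y \notin C.

Definition optimal_AED (q n : nat) (C : {set word q n}) : Prop :=
  is_AED C /\ forall D : {set word q n}, is_AED D -> (#|D| <= #|C|)%N.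

Definition sum_code (q n : nat) (j : nat) : {set word q n} :=
  [set x : word q n | (\sum_(i < n) (x i : nat)) %% q == j %% q].

(* Main.v *)
Require Import Defs.
From mathcomp Require Import all_boot.
Set Implicit Arguments. Unset Strict Implicit.

Section S.
Variables (q m : nat).

Definition rr (x : word q m.+1) : word q m := [ffun k => x (lift ord0 k)].

Lemma line_out (x y : word q m.+1) :
  rr x = rr y -> (x ord0 <= y ord0)%N -> y \in Out x.
Proof.
move=> Hr Hle; rewrite inE /is_out; apply/andP; split.
  apply/forallP => i; case: (unliftP ord0 i) => [k ->|->] //.
  by have := congr1 (fun f : word q m => f k) Hr; rewrite !ffunE => ->.
rewrite -(cards1 (@ord0 m)); apply: subset_leq_card.
apply/subsetP => i; rewrite !inE; case: (unliftP ord0 i) => [k ->|->] //.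
by have := congr1 (fun f : word q m => f k) Hr; rewrite !ffunE => ->; rewrite eqxx.
Qed.

Lemma aed_bound (D : {set word q m.+1}) : is_AED D -> (#|D| <= q ^ m)%N.
Proof.
move=> HD.
have inj : {in D &, injective rr}.
  move=> x y xD yD Hr.
  case: (leqP (x ord0) (y ord0)) => [le|/ltnW le].
    case: (eqVneq y x) => [//|ne].
    by have := HD x y xD (line_out Hr le) ne; rewrite yD.
  case: (eqVneq x y) => [//|ne].
  by have := HD y x yD (line_out (esym Hr) le) ne; rewrite xD.
rewrite -(card_in_imset inj).
apply: leq_trans (max_card _) _.
by rewrite card_ffun !card_ord.
Qed.
End S.

Theorem corollary1 (q n : nat) (hq : (0 < q)%N) (hn : (0 < n)%N) (j : nat) (hj : (j < q)%N) :
  optimal_AED (sum_code q n j) /\ #|sum_code q n j| = (q ^ n.-1)%N.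
Proof.
case: n hn => // m _ /=.
have aed : is_AED (sum_code q m.+1 j).
  move=> x y; rewrite !inE /is_out => xC /andP[/forallP le c1] ne.
  have [i xi] : exists i, x i != y i.
    apply/existsP; apply: contraR ne; rewrite negb_exists => /forallP H.
    by apply/eqP/ffunP => k; have := H k; rewrite negbK => /eqP.
  have other : forall k, k != i -> x k = y k.
    move=> k nk; apply/eqP; apply: contraR nk => nk.
    have := (card_le1_eqP c1) k i; rewrite !inE => H.
    by rewrite (H nk xi).
  rewrite (bigD1 i) //= in xC; rewrite (bigD1 i) //=.
  rewrite (eq_bigr (fun k => (x k : nat))); last by move=> k /other ->.
  apply: contra xi => yC.
  have := eqP yC; rewrite -(eqP xC) => E.
  have : (\sum_(k | k != i) (x k : nat) + y i == \sum_(k | k != i) (x k : nat) + x i %[mod q]).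
    by rewrite addnC [X in _ == X %[mod q]]addnC E.
  rewrite eqn_modDl !modn_small // => /eqP H.
  by apply/eqP/val_inj.
have ub := aed_bound aed.
have lb : (q ^ m <= #|sum_code q m.+1 j|)%N.
  pose s (z : word q m) := \sum_(k < m) (z k : nat).
  have cq : forall z, ((j + (q - s z %% q)) %% q < q)%N by move=> z; rewrite ltn_mod.
  pose ext (z : word q m) : word q m.+1 :=
    [ffun i => if unlift ord0 i is Some k then z k else Ordinal (cq z)].
  have rext : forall z, rr (ext z) = z.
    by move=> z; apply/ffunP => k; rewrite !ffunE liftK.
  have eC : forall z, ext z \in sum_code q m.+1 j.
    move=> z; rewrite inE big_ord_recl.
    rewrite (eq_bigr (fun k => (z k : nat))); last by move=> k _; rewrite ffunE liftK.
    rewrite ffunE unlift_none /= -/(s z) modnDml -addnA -modnDmr modnDmr.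
    have -> : (q - s z %% q + s z = (q - s z %% q + s z %% q) + (s z - s z %% q))%N.
      have h1 : (s z %% q <= q)%N by apply/ltnW; rewrite ltn_mod.
      have h2 : (s z %% q <= s z)%N by apply: leq_mod.
      by rewrite -addnA subnKC.
    rewrite subnK; last by apply/ltnW; rewrite ltn_mod.
    rewrite addnA -modnDmr.
    have -> : (s z - s z %% q) %% q = 0 by rewrite {1}(divn_eq (s z) q) addnK modnMl.
    by rewrite addn0 modnDr.
  apply: leq_trans (leq_imset_card (@rr q m) _).
  have -> : (q ^ m = #|word q m|)%N by rewrite card_ffun !card_ord.
  apply: subset_leq_card; apply/subsetP => z _.
  by apply/imsetP; exists (ext z); rewrite ?rext.
have eq : #|sum_code q m.+1 j| = (q ^ m)%N by apply/eqP; rewrite eqn_leq ub lb.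
split => //; split => // D HD; rewrite eq; exact: aed_bound.
Qed.
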